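(* Let $X$ be a compact metric space and $\mathcal C,\mathcal D\subseteq\mathcal P(X)$. Let $P^\nu_{\mathcal C}$ and $P^\nu_{\mathcal D}$ be the optimal derivation sequences for $\mathcal C$ and $\mathcal D$, and let $Q^\nu$ be the optimal derivation sequence for $\{C\cap D: C\in\mathcal C, D\in\mathcal D\}$. Then for all ordinals $\nu,\mu$, $Q^{\nu\#\mu}\subseteq P^\nu_{\mathcal C}\cup P^\mu_{\mathcal D}$.
   Context: Optimal derivation sequence: for $\mathcal C\subseteq\mathcal P(X)$, define $P^0=X$, $P^{\nu+1}=P^\nu\setminus\bigcup\{U\subseteq X \text{ open}: P^\nu\cap U\subseteq C\text{ for some }C\in\mathcal C\}$, and $P^\lambda=\bigcap_{\nu<\lambda}P^\nu$ for limit $\lambda$. Natural (Hessenberg) sum: if $\alpha$ and $\beta$ have Cantor normal forms with exponents among $\xi_1>\dots>\xi_r$, $\alpha=\sum_i\omega^{\xi_i}m_i$, $\beta=\sum_i\omega^{\xi_i}n_i$ ($m_i,n_i\in\mathbb N$), then $\alpha\#\beta=\sum_i\omega^{\xi_i}(m_i+n_i)$. *)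

(* Defs.v *)
From Stdlib Require Import Reals List.
Open Scope R_scope.

Definition is_metric {X : Type} (d : X -> X -> R) : Prop :=
  (forall x y, 0 <= d x y) /\
  (forall x y, d x y = 0 <-> x = y) /\
  (forall x y, d x y = d y x) /\
  (forall x y z, d x z <= d x y + d y z).

Definition is_open {X : Type} (d : X -> X -> R) (U : X -> Prop) : Prop :=
  forall x, U x -> exists eps, 0 < eps /\ forall y, d x y < eps -> U y.

Definition is_compact {X : Type} (d : X -> X -> R) : Prop :=
  forall (I : Type) (U : I -> X -> Prop),
    (forall i, is_open d (U i)) ->
    (forall x, exists i, U i x) ->
    exists l : list I, forall x, exists i, In i l /\ U i x.

(* [osup A f] is the least ordinal strictly above every [f a]. *)
Inductive Ord : Type :=
  osup : forall (A : Type), (A -> Ord) -> Ord.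

Fixpoint ole (a b : Ord) {struct a} : Prop :=
  match a, b with
  | osup A f, osup B g => forall x, exists y, ole (f x) (g y)
  end.

Definition olt (a b : Ord) : Prop :=
  match b with osup B g => exists y, ole a (g y) end.

Definition oeq (a b : Ord) : Prop := ole a b /\ ole b a.

Definition ozero : Ord := osup Empty_set (fun e => match e with end).

Fixpoint oadd (a b : Ord) {struct b} : Ord :=
  match b with
  | osup B g =>
      match a with
      | osup A f =>
          osup (A + B) (fun s => match s with
                                 | inl x => f x
                                 | inr y => oadd a (g y)
                                 end)
      end
  end.

Fixpoint omul_nat (a : Ord) (n : nat) : Ord :=
  match n with
  | O => ozero
  | S n => oadd (omul_nat a n) a
  end.

Fixpoint oexpw (b : Ord) : Ord :=
  match b with
  | osup B g =>
      osup (option (B * nat))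
        (fun o => match o with
                  | None => ozero
                  | Some (y, n) => omul_nat (oexpw (g y)) n
                  end)
  end.

Fixpoint cnf_aux (acc : Ord) (l : list (Ord * nat)) : Ord :=
  match l with
  | nil => acc
  | (x, m) :: l' => cnf_aux (oadd acc (omul_nat (oexpw x) m)) l'
  end.

Definition cnf (l : list (Ord * nat)) : Ord := cnf_aux ozero l.

Fixpoint strictly_decreasing (l : list Ord) : Prop :=
  match l with
  | x :: ((y :: _) as t) => olt y x /\ strictly_decreasing t
  | _ => True
  end.

(* Natural (Hessenberg) sum, as defined in the paper: rho = alpha # beta iff
   for some exponents xi_1 > ... > xi_r and naturals m_i, n_i,
   alpha = sum w^{xi_i} m_i, beta = sum w^{xi_i} n_i, rho = sum w^{xi_i}(m_i+n_i). *)
Definition natural_sum (alpha beta rho : Ord) : Prop :=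
  exists l : list (Ord * nat * nat),
    strictly_decreasing (map (fun t => fst (fst t)) l) /\
    oeq alpha (cnf (map (fun t => (fst (fst t), snd (fst t))) l)) /\
    oeq beta  (cnf (map (fun t => (fst (fst t), snd t)) l)) /\
    oeq rho   (cnf (map (fun t => (fst (fst t), (snd (fst t) + snd t)%nat)) l)).

Definition deriv_step {X : Type} (d : X -> X -> R) (CC : (X -> Prop) -> Prop)
  (P : X -> Prop) : X -> Prop :=
  fun x => P x /\
    ~ (exists U, is_open d U /\ U x /\
         exists C, CC C /\ forall y, P y -> U y -> C y).

(* P^alpha = X ∩ ⋂_{beta < alpha} D(P^beta); this is the transfinite recursion
   P^0 = X, P^{nu+1} = D(P^nu), P^lambda = ⋂_{nu<lambda} P^nu. *)
Fixpoint opt_deriv {X : Type} (d : X -> X -> R) (CC : (X -> Prop) -> Prop)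
  (alpha : Ord) : X -> Prop :=
  match alpha with
  | osup A f => fun x => forall a : A, deriv_step d CC (opt_deriv d CC (f a)) x
  end.

Definition meet_family {X : Type} (CC DD : (X -> Prop) -> Prop) : (X -> Prop) -> Prop :=
  fun E => exists C D, CC C /\ DD D /\ forall x, E x <-> (C x /\ D x).

(* Main.v *)
Require Import Defs.
From Stdlib Require Import Reals List Classical Lia.

Lemma ole_refl : forall a, ole a a.
Proof. induction a as [A f IH]; simpl; intros x; exists x; apply IH. Qed.

Lemma ole_trans : forall a b c, ole a b -> ole b c -> ole a c.
Proof.
  induction a as [A f IH]; intros [B g] [C h]; simpl; intros H1 H2 x.
  destruct (H1 x) as [y Hy]. destruct (H2 y) as [z Hz]. exists z. eapply IH; eauto.
Qed.

Lemma child_le_aux : forall t, match t with osup C h => forall z, ole (h z) t end.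
Proof.
  induction t as [C h IH]. intros z. pose proof (IH z) as Hz.
  remember (h z) as t eqn:E. destruct t as [D k]. simpl. intros w. exists z.
  rewrite <- E. apply Hz.
Qed.

Lemma child_le : forall C h z, ole (h z) (osup C h).
Proof. intros C h z. exact (child_le_aux (osup C h) z). Qed.

Lemma child_lt : forall C h z, olt (h z) (osup C h).
Proof. intros. simpl. exists z. apply ole_refl. Qed.

Lemma olt_ole : forall a b, olt a b -> ole a b.
Proof. intros a [B g] [y H]. eapply ole_trans; [exact H | apply child_le]. Qed.

Lemma ole_olt_trans : forall a b c, ole a b -> olt b c -> olt a c.
Proof. intros a b [C h] H [z Hz]. exists z. eapply ole_trans; eauto. Qed.

Lemma olt_ole_trans : forall a b c, olt a b -> ole b c -> olt a c.
Proof.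
  intros a [B g] [C h] [y Hy] H. destruct (H y) as [z Hz]. exists z. eapply ole_trans; eauto.
Qed.

Lemma olt_trans : forall a b c, olt a b -> olt b c -> olt a c.
Proof. intros. eapply ole_olt_trans; [apply olt_ole; eauto | eauto]. Qed.

Lemma ole_osup_iff : forall A f b, (forall x, olt (f x) b) -> ole (osup A f) b.
Proof. intros A f [B g] H; simpl; exact H. Qed.

Lemma trich : forall a b, (ole a b \/ olt b a) /\ (ole b a \/ olt a b).
Proof.
  induction a as [A f IHa]. intro b. induction b as [B g IHb]. split.
  - destruct (classic (forall x, olt (f x) (osup B g))) as [H|H].
    + left. apply ole_osup_iff; exact H.
    + right. apply not_all_ex_not in H as [x Hx]. exists x.
      destruct (proj2 (IHa x (osup B g))); tauto.
  - destruct (classic (forall y, olt (g y) (osup A f))) as [H|H].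
    + left. apply ole_osup_iff; exact H.
    + right. apply not_all_ex_not in H as [y Hy]. exists y.
      destruct (proj1 (IHb y)); tauto.
Qed.

Lemma oadd_mono_r : forall b b' a, ole b b' -> ole (oadd a b) (oadd a b').
Proof.
  induction b as [B g IH]; intros [B' g'] [A f] H. simpl. intros [x|y].
  - exists (inl x). apply ole_refl.
  - destruct (H y) as [y' Hy]. exists (inr y'). apply IH; auto.
Qed.

Lemma oadd_lt_r : forall a b b', olt b b' -> olt (oadd a b) (oadd a b').
Proof.
  intros [A f] b [B' g'] [y' Hy]. simpl. exists (inr y'). apply oadd_mono_r; auto.
Qed.

Lemma oadd_mono_l : forall b a a', ole a a' -> ole (oadd a b) (oadd a' b).
Proof.
  induction b as [B g IH]; intros [A f] [A' f'] H. simpl. intros [x|y].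
  - destruct (H x) as [x' Hx]. exists (inl x'). exact Hx.
  - exists (inr y). apply IH; auto.
Qed.

Lemma oadd_infl : forall a b, ole a (oadd a b).
Proof. intros [A f] [B g]; simpl; intros x; exists (inl x); apply ole_refl. Qed.

Lemma oadd_zero : forall a, ole (oadd a ozero) a.
Proof. intros [A f]; unfold ozero; simpl; intros [x|[]]; exists x; apply ole_refl. Qed.

Lemma oadd_assoc : forall c a b,
  ole (oadd (oadd a b) c) (oadd a (oadd b c)) /\ ole (oadd a (oadd b c)) (oadd (oadd a b) c).
Proof.
  induction c as [C h IH]; intros [A f] [B g]. split.
  - simpl. intros [[x|y]|z].
    + exists (inl x). apply ole_refl.
    + exists (inr (inl y)). apply ole_refl.
    + exists (inr (inr z)). exact (proj1 (IH z (osup A f) (osup B g))).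
  - simpl. intros [x|[y|z]].
    + exists (inl (inl x)). apply ole_refl.
    + exists (inl (inr y)). apply ole_refl.
    + exists (inr z). exact (proj2 (IH z (osup A f) (osup B g))).
Qed.
Lemma omul_mono_n : forall a n n', (n <= n')%nat -> ole (omul_nat a n) (omul_nat a n').
Proof.
  intros a n n' H. induction H. apply ole_refl.
  eapply ole_trans; [exact IHle| simpl; apply oadd_infl].
Qed.

Lemma omul_mono_a : forall n a a', ole a a' -> ole (omul_nat a n) (omul_nat a' n).
Proof.
  induction n; intros a a' H; simpl. intros [].
  eapply ole_trans; [apply oadd_mono_l, IHn, H| apply oadd_mono_r, H].
Qed.

Lemma omul_add : forall a m n, ole (oadd (omul_nat a n) (omul_nat a m)) (omul_nat a (n + m)).
Proof.
  intros a m; induction m; intros n.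
  - rewrite Nat.add_0_r. apply oadd_zero.
  - rewrite Nat.add_succ_r. simpl.
    eapply ole_trans; [apply (proj2 (oadd_assoc _ _ _))|].
    apply oadd_mono_l, IHm.
Qed.

Lemma oexpw_mono : forall x y, ole x y -> ole (oexpw x) (oexpw y).
Proof.
  induction x as [B g IH]; intros [B' g'] H; simpl. intros [[i n]|].
  - destruct (H i) as [j Hj]. exists (Some (j,n)). apply omul_mono_a, IH; auto.
  - exists None. intros [].
Qed.

Lemma oexpw_lt : forall z x k, olt z x -> olt (omul_nat (oexpw z) k) (oexpw x).
Proof.
  intros z [B g] k [y Hy]. simpl. exists (Some (y,k)). apply omul_mono_a, oexpw_mono, Hy.
Qed.

Lemma oexpw_pos : forall x, olt ozero (oexpw x).
Proof. intros [B g]. simpl. exists None. intros []. Qed.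

Lemma dec_add : forall c a B h, olt c (oadd a (osup B h)) -> ole c a \/ exists y, ole c (oadd a (h y)).
Proof.
  intros c [A f] B h. simpl. intros [[x|y] H].
  - left. eapply ole_trans; [exact H| apply child_le].
  - right. exists y. exact H.
Qed.

Lemma dec_w : forall c a xi, olt c (oadd a (oexpw xi)) ->
  ole c a \/ exists eta k, olt eta xi /\ ole c (oadd a (omul_nat (oexpw eta) k)).
Proof.
  intros c a [B g] H. destruct (dec_add c a _ _ H) as [H1|[[[y k]|] H2]].
  - left; auto.
  - right. exists (g y), k. split; [apply child_lt| exact H2].
  - left. eapply ole_trans; [exact H2| apply oadd_zero].
Qed.

Lemma absorb : forall xi b c eta m, olt c (oadd b (oexpw xi)) -> olt eta xi ->
  olt (oadd c (omul_nat (oexpw eta) m)) (oadd b (oexpw xi)).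
Proof.
  intros xi b c eta m Hc He. destruct (dec_w c b xi Hc) as [H1|[zeta [k [Hz H2]]]].
  - eapply ole_olt_trans; [apply oadd_mono_l, H1|]. apply oadd_lt_r, oexpw_lt, He.
  - assert (exists z, ole zeta z /\ ole eta z /\ olt z xi) as [z [Z1 [Z2 Z3]]].
    { destruct (proj1 (trich zeta eta)) as [T|T].
      - exists eta; repeat split; auto; apply ole_refl.
      - exists zeta; repeat split; auto; [apply ole_refl| apply olt_ole; auto]. }
    eapply ole_olt_trans; [apply oadd_mono_l, H2|].
    eapply ole_olt_trans.
    { eapply ole_trans; [apply oadd_mono_l, oadd_mono_r, omul_mono_a, oexpw_mono, Z1|].
      apply oadd_mono_r, omul_mono_a, oexpw_mono, Z2. }
    eapply ole_olt_trans; [apply (proj1 (oadd_assoc _ _ _))|].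
    eapply ole_olt_trans; [apply oadd_mono_r, omul_add|].
    apply oadd_lt_r, oexpw_lt, Z3.
Qed.

Lemma tail_lt : forall M xi b c, (forall t, In t M -> olt (fst t) xi) ->
  olt c (oadd b (oexpw xi)) -> olt (cnf_aux c M) (oadd b (oexpw xi)).
Proof.
  induction M as [|[eta m] M IH]; simpl; intros xi b c HM Hc; auto.
  apply IH; auto. apply absorb; auto. apply (HM (eta, m)); auto.
Qed.

Lemma cnf_infl : forall M acc, ole acc (cnf_aux acc M).
Proof.
  induction M as [|[x m] M IH]; simpl; intros acc. apply ole_refl.
  eapply ole_trans; [apply oadd_infl| apply IH].
Qed.

Lemma cnf_mono : forall M acc acc', ole acc acc' -> ole (cnf_aux acc M) (cnf_aux acc' M).
Proof.
  induction M as [|[x m] M IH]; simpl; intros acc acc' H; auto.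
  apply IH, oadd_mono_l, H.
Qed.

Lemma cnf_app : forall l1 l2 acc, cnf_aux acc (l1 ++ l2) = cnf_aux (cnf_aux acc l1) l2.
Proof. induction l1 as [|[x m] l1 IH]; simpl; auto. Qed.

Lemma lex : forall s xi c c' T T', (c < c')%nat -> (forall t, In t T -> olt (fst t) xi) ->
  olt (cnf_aux (oadd s (omul_nat (oexpw xi) c)) T) (cnf_aux (oadd s (omul_nat (oexpw xi) c')) T').
Proof.
  intros s xi c c' T T' Hc HT.
  set (u := oadd s (omul_nat (oexpw xi) c)).
  eapply olt_ole_trans.
  - apply tail_lt; [exact HT|].
    eapply ole_olt_trans; [apply (oadd_infl u ozero)|]. apply oadd_lt_r, oexpw_pos.
  - eapply ole_trans; [apply (proj1 (oadd_assoc _ _ _))|].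
    eapply ole_trans; [|apply cnf_infl].
    apply oadd_mono_r. change (ole (omul_nat (oexpw xi) (S c)) (omul_nat (oexpw xi) c')).
    apply omul_mono_n. lia.
Qed.
Definition E (L : list (Ord * nat * nat)) := map (fun t => fst (fst t)) L.
Definition Em (L : list (Ord * nat * nat)) := map (fun t => (fst (fst t), snd (fst t))) L.
Definition En (L : list (Ord * nat * nat)) := map (fun t => (fst (fst t), snd t)) L.
Definition Es (L : list (Ord * nat * nat)) :=
  map (fun t => (fst (fst t), (snd (fst t) + snd t)%nat)) L.
Definition Z (L : list (Ord * nat * nat)) := map (fun t => (fst (fst t), 0%nat, snd t)) L.
Definition sw (L : list (Ord * nat * nat)) := map (fun t => (fst (fst t), snd t, snd (fst t))) L.

Lemma E_Z : forall L, E (Z L) = E L.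
Proof. induction L; simpl; f_equal; auto. Qed.
Lemma En_Z : forall L, En (Z L) = En L.
Proof. induction L; simpl; f_equal; auto. Qed.
Lemma E_sw : forall L, E (sw L) = E L.
Proof. induction L; simpl; f_equal; auto. Qed.
Lemma Em_sw : forall L, Em (sw L) = En L.
Proof. induction L; simpl; f_equal; auto. Qed.
Lemma En_sw : forall L, En (sw L) = Em L.
Proof. induction L; simpl; f_equal; auto. Qed.
Lemma Es_sw : forall L, Es (sw L) = Es L.
Proof. induction L; simpl; f_equal; auto. f_equal. lia. Qed.

Lemma split_lemma : forall L acc b, olt b (cnf_aux acc (Em L)) -> olt b acc \/
  exists P xi m n T, L = P ++ (xi, S m, n) :: T /\
    olt b (oadd (cnf_aux acc (Em P)) (omul_nat (oexpw xi) (S m))).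
Proof.
  induction L as [|t T IH]; unfold Em in *; simpl; intros acc b H. left; auto.
  destruct t as [[xi c] n]. simpl in H.
  destruct (IH _ _ H) as [H1|[P [xi' [m [n' [T' [EL H2]]]]]]].
  - destruct c as [|m].
    + left. eapply olt_ole_trans; [exact H1| apply oadd_zero].
    + right. exists nil, xi, m, n, T. split; [reflexivity| simpl; exact H1].
  - right. exists ((xi,c,n)::P), xi', m, n', T'. split. rewrite EL; reflexivity.
    simpl. exact H2.
Qed.

Lemma sd_tail_lt : forall l xi, strictly_decreasing (xi :: l) -> forall y, In y l -> olt y xi.
Proof.
  induction l as [|z l IH]; simpl; intros xi H y Hy. contradiction.
  destruct H as [H1 H2]. destruct Hy as [<-|Hy]; auto.
  eapply olt_trans; [eapply IH; eauto| exact H1].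
Qed.

Lemma sd_cons : forall x l, strictly_decreasing (x :: l) -> strictly_decreasing l.
Proof. intros x [|y l]; simpl; tauto. Qed.

Lemma sd_suffix : forall P l, strictly_decreasing (P ++ l) -> strictly_decreasing l.
Proof. induction P as [|x P IH]; auto. intros l H. apply IH. exact (sd_cons _ _ H). Qed.

Lemma sd_replace : forall P x l l', strictly_decreasing (P ++ x :: l) ->
  strictly_decreasing (x :: l') -> strictly_decreasing (P ++ x :: l').
Proof.
  induction P as [|y P IH]; simpl; auto. intros x l l' H1 H2.
  destruct P as [|z P]; simpl in *.
  - destruct H1; split; auto.
  - destruct H1 as [Ha Hb]; split; auto. eapply IH; eauto.
Qed.

Lemma ins_ex : forall T xi eta p, strictly_decreasing (xi :: E T) -> olt eta xi ->
  exists T', strictly_decreasing (xi :: E T') /\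
    (forall acc, ole (oadd acc (omul_nat (oexpw eta) p)) (cnf_aux acc (Em T'))) /\
    (forall acc, ole (cnf_aux acc (En T)) (cnf_aux acc (En T'))).
Proof.
  intros [|[[zeta c] n'] T2] xi eta p HT He.
  - exists ((eta, p, 0%nat) :: nil). simpl. split; [split; auto|split].
    + intros; apply ole_refl.
    + intros acc; exact (oadd_infl acc ozero).
  - destruct (proj1 (trich eta zeta)) as [H|H].
    + exists ((zeta, p, n') :: Z T2). split; [|split].
      * simpl. rewrite E_Z. exact HT.
      * intros acc. simpl. eapply ole_trans; [|apply cnf_infl].
        apply oadd_mono_r, omul_mono_a, oexpw_mono, H.
      * intros acc. simpl. rewrite En_Z. apply ole_refl.
    + exists ((eta, p, 0%nat) :: Z ((zeta, c, n') :: T2)). split; [|split].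
      * change (strictly_decreasing (xi :: eta :: E (Z ((zeta, c, n') :: T2)))).
        rewrite E_Z. simpl in *. tauto.
      * intros acc. exact (cnf_infl (Em (Z ((zeta, c, n') :: T2))) (oadd acc (omul_nat (oexpw eta) p))).
      * intros acc. change (ole (cnf_aux acc (En ((zeta, c, n') :: T2)))
          (cnf_aux (oadd acc (omul_nat (oexpw eta) 0)) (En (Z ((zeta, c, n') :: T2))))).
        rewrite En_Z. apply cnf_mono, oadd_infl.
Qed.

Lemma stepM : forall L b, strictly_decreasing (E L) -> olt b (cnf (Em L)) ->
  exists L', strictly_decreasing (E L') /\ ole b (cnf (Em L')) /\
    ole (cnf (En L)) (cnf (En L')) /\ olt (cnf (Es L')) (cnf (Es L)).
Proof.
  intros L b HL Hb. unfold cnf in Hb.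
  destruct (split_lemma L ozero b Hb) as [Hc|[P [xi [m [n [T [EL Hb2]]]]]]].
  - exfalso. unfold ozero in Hc. destruct Hc as [[] _].
  - subst L. set (S0 := cnf_aux ozero (Em P)) in *.
    assert (Hb3 : olt b (oadd (oadd S0 (omul_nat (oexpw xi) m)) (oexpw xi))).
    { eapply olt_ole_trans; [exact Hb2| apply (proj2 (oadd_assoc _ _ _))]. }
    assert (HT : strictly_decreasing (xi :: E T)).
    { unfold E in HL. rewrite map_app in HL. apply sd_suffix in HL. exact HL. }
    assert (key : exists T', strictly_decreasing (xi :: E T') /\
       ole b (cnf_aux (oadd S0 (omul_nat (oexpw xi) m)) (Em T')) /\
       forall acc, ole (cnf_aux acc (En T)) (cnf_aux acc (En T'))).
    { destruct (dec_w _ _ _ Hb3) as [H1|[eta [k [He H2]]]].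
      - exists (Z T). split; [rewrite E_Z; auto|split].
        + eapply ole_trans; [exact H1| apply cnf_infl].
        + intros; rewrite En_Z; apply ole_refl.
      - destruct (ins_ex T xi eta k HT He) as [T' [A1 [A2 A3]]].
        exists T'. split; [auto|split; auto]. eapply ole_trans; [exact H2| apply A2]. }
    destruct key as [T' [K1 [K2 K3]]].
    exists (P ++ (xi, m, n) :: T'). unfold cnf, E, Em, En, Es in *.
    rewrite !map_app, !cnf_app. cbn [map cnf_aux fst snd]. split; [|split; [|split]].
    + rewrite map_app in HL. apply sd_replace with (l := map (fun t => fst (fst t)) T); auto.
    + exact K2.
    + apply K3.
    + apply (lex _ xi (m + n) (S m + n)). lia. intros t Ht. apply in_map_iff in Ht as [u [<- Hu]]. simpl.
      apply (sd_tail_lt _ _ K1). apply in_map with (f := fun t => fst (fst t)). exact Hu.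
Qed.

Lemma stepN : forall L b, strictly_decreasing (E L) -> olt b (cnf (En L)) ->
  exists L', strictly_decreasing (E L') /\ ole (cnf (Em L)) (cnf (Em L')) /\
    ole b (cnf (En L')) /\ olt (cnf (Es L')) (cnf (Es L)).
Proof.
  intros L b HL Hb. rewrite <- E_sw in HL. rewrite <- Em_sw in Hb.
  destruct (stepM _ _ HL Hb) as [L' [H1 [H2 [H3 H4]]]].
  exists (sw L'). rewrite E_sw, Em_sw, En_sw, Es_sw. rewrite En_sw, !Es_sw in *.
  auto.
Qed.

Fixpoint N (a : Ord) : Ord -> Ord :=
  match a with
  | osup A f => fix N' (b : Ord) : Ord :=
      match b with
      | osup B g => osup (A + B) (fun s => match s with
                                        | inl x => N (f x) b
                                        | inr y => N' (g y) end)
      end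
  end.

Lemma N_eq : forall A f B g, N (osup A f) (osup B g) =
  osup (A + B) (fun s => match s with inl x => N (f x) (osup B g) | inr y => N (osup A f) (g y) end).
Proof. reflexivity. Qed.

Lemma N_bound : forall nu mu L, strictly_decreasing (E L) -> ole nu (cnf (Em L)) ->
  ole mu (cnf (En L)) -> ole (N nu mu) (cnf (Es L)).
Proof.
  induction nu as [A f IHf]. intros mu. induction mu as [B g IHg]. intros L HL Hn Hm.
  rewrite N_eq. apply ole_osup_iff. intros [x|y].
  - assert (H : olt (f x) (cnf (Em L))) by (eapply olt_ole_trans; [apply child_lt| exact Hn]).
    destruct (stepM L _ HL H) as [L' [H1 [H2 [H3 H4]]]].
    eapply ole_olt_trans; [|exact H4]. apply IHf; auto. eapply ole_trans; eauto.
  - assert (H : olt (g y) (cnf (En L))) by (eapply olt_ole_trans; [apply child_lt| exact Hm]).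
    destruct (stepN L _ HL H) as [L' [H1 [H2 [H3 H4]]]].
    eapply ole_olt_trans; [|exact H4]. apply IHg; auto. eapply ole_trans; eauto.
Qed.
Lemma deriv_mono : forall (X : Type) (d : X -> X -> R) CC (P P' : X -> Prop),
  (forall y, P y -> P' y) -> forall x, deriv_step d CC P x -> deriv_step d CC P' x.
Proof.
  unfold deriv_step. intros X d CC P P' H x [Hx Hn]. split; auto.
  intros [U [HU [Ux [C [HC HC']]]]]. apply Hn. exists U. split; auto. split; auto.
  exists C. split; auto.
Qed.

Lemma od_anti : forall (X : Type) (d : X -> X -> R) CC a b, ole a b ->
  forall x, opt_deriv d CC b x -> opt_deriv d CC a x.
Proof.
  intros X d CC. induction a as [A f IH]; intros [B g] H x Hx; simpl in *. intros a'.
  destruct (H a') as [y Hy]. apply deriv_mono with (opt_deriv d CC (g y)); auto.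
  intros z; apply IH; auto.
Qed.

Lemma od_step : forall (X : Type) (d : X -> X -> R) CC a b x, olt a b ->
  opt_deriv d CC b x -> deriv_step d CC (opt_deriv d CC a) x.
Proof.
  intros X d CC a [B g] x [y Hy] Hx. simpl in Hx.
  apply deriv_mono with (opt_deriv d CC (g y)); auto. intros z; apply od_anti; auto.
Qed.

Lemma open_inter : forall (X : Type) (d : X -> X -> R) U V, is_open d U -> is_open d V ->
  is_open d (fun y => U y /\ V y).
Proof.
  intros X d U V HU HV x [Ux Vx].
  destruct (HU x Ux) as [e1 [e1p H1]]. destruct (HV x Vx) as [e2 [e2p H2]].
  exists (Rmin e1 e2). split; [apply Rmin_pos; auto|].
  intros y Hy. split.
  - apply H1. eapply Rlt_le_trans; [exact Hy| apply Rmin_l].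
  - apply H2. eapply Rlt_le_trans; [exact Hy| apply Rmin_r].
Qed.

Lemma main_N : forall (X : Type) (d : X -> X -> R) CC DD nu mu x,
  opt_deriv d (meet_family CC DD) (N nu mu) x -> opt_deriv d CC nu x \/ opt_deriv d DD mu x.
Proof.
  intros X d CC DD. induction nu as [A f IHf]; intros mu; induction mu as [B g IHg]; intros x Hx.
  rewrite N_eq in Hx. simpl in Hx.
  apply NNPP; intros Hn. apply not_or_and in Hn as [Hn1 Hn2].
  assert (Hn1' := Hn1). assert (Hn2' := Hn2).
  simpl in Hn1', Hn2'. apply not_all_ex_not in Hn1' as [a Ha].
  apply not_all_ex_not in Hn2' as [b Hb].
  destruct (classic (opt_deriv d CC (f a) x)) as [Pa|Pa].
  2:{ destruct (IHf a (osup B g) x (proj1 (Hx (inl a)))); tauto. }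
  destruct (classic (opt_deriv d DD (g b) x)) as [Pb|Pb].
  2:{ destruct (IHg b x (proj1 (Hx (inr b)))); tauto. }
  assert (HU : exists U, is_open d U /\ U x /\ exists C, CC C /\
            forall y, opt_deriv d CC (f a) y -> U y -> C y).
  { apply NNPP; intro H; apply Ha; split; auto. }
  assert (HV : exists V, is_open d V /\ V x /\ exists D, DD D /\
            forall y, opt_deriv d DD (g b) y -> V y -> D y).
  { apply NNPP; intro H; apply Hb; split; auto. }
  destruct HU as [U [HUo [Ux [C [HC HCU]]]]].
  destruct HV as [V [HVo [Vx [D [HD HDV]]]]].
  set (al := N (f a) (osup B g)). set (be := N (osup A f) (g b)).
  assert (Key : forall r, ole al r -> ole be r ->
     deriv_step d (meet_family CC DD) (opt_deriv d (meet_family CC DD) r) x -> False).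
  { intros r H1 H2 [_ Hd]. apply Hd. exists (fun y => U y /\ V y).
    split; [apply open_inter; auto|]. split; [auto|].
    exists (fun y => C y /\ D y). split.
    - exists C, D. split; auto. split; auto. intros; tauto.
    - intros y Qy [Uy Vy]. split.
      + destruct (IHf a (osup B g) y (od_anti _ _ _ _ _ H1 _ Qy)) as [Y|Y]; auto.
        exfalso. destruct (od_step _ _ _ _ _ _ (child_lt _ g b) Y) as [_ Hnd].
        apply Hnd. exists V. split; auto. split; auto. exists D; auto.
      + destruct (IHg b y (od_anti _ _ _ _ _ H2 _ Qy)) as [Y|Y]; auto.
        exfalso. destruct (od_step _ _ _ _ _ _ (child_lt _ f a) Y) as [_ Hnd].
        apply Hnd. exists U. split; auto. split; auto. exists C; auto. }
  destruct (proj1 (trich al be)) as [T|T].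
  - apply (Key be T (ole_refl _) (Hx (inr b))).
  - apply (Key al (ole_refl _) (olt_ole _ _ T) (Hx (inl a))).
Qed.

Theorem mainTheorem16 (X : Type) (d : X -> X -> R)
  (Hmetric : is_metric d) (Hcompact : is_compact d)
  (CC DD : (X -> Prop) -> Prop)
  (nu mu rho : Ord) (Hsum : natural_sum nu mu rho) :
  forall x : X,
    opt_deriv d (meet_family CC DD) rho x ->
    opt_deriv d CC nu x \/ opt_deriv d DD mu x.
Proof.
  intros x Hx. destruct Hsum as [L [HL [H1 [H2 H3]]]].
  assert (Hb : ole (N nu mu) (cnf (Es L))) by (apply N_bound; [exact HL|exact (proj1 H1)|exact (proj1 H2)]).
  apply main_N. eapply od_anti; [|exact Hx]. eapply ole_trans; [exact Hb| exact (proj2 H3)].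
Qed.
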